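(* Let $n\in\mathbb N$ and let $A$ be a partition of $\{1,\dots,2n\}$. For $u=(u_0,u_1,\dots,u_{2n})\in(\mathbb R^d)^{2n+1}$ write $M_A(u):=M_A((u_l)_{l\in I_A})$. Then for all $j\in\{2,\dots,2n+1\}$ with $j-1\in I_A$, $$u_0+\sum_{l=1}^{j-1}[M_A(u)]_l=u_{j-1}+u_0+\sum_{l\in\{1,\dots,j-2\}\cap I_A}\sigma_{A,j-2}(l)\,u_l.$$
   Context: $J_A=\{\max a:a\in A\}$, $I_A=\{1,\dots,2n\}\setminus J_A$, and $a(l)$ denotes the block of $A$ containing $l$. For $w=(w_l)_{l\in I_A}\in(\mathbb R^d)^{I_A}$, $M_A(w)\in(\mathbb R^d)^{2n}$ is defined by $[M_A(w)]_j=w_j$ if $j\in I_A$ and $[M_A(w)]_j=-\sum_{l\in a(j)\setminus\{j\}}w_l$ if $j\in J_A$. For $j\in\{0,\dots,2n+1\}$, $\sigma_{A,j}:\{1,\dots,2n\}\to\{0,1\}$ is $\sigma_{A,j}(l)=1$ if $\max a(l)>j$ and $0$ otherwise. *)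

(* Defs.v *)
From HB Require Import structures.
From mathcomp Require Import all_boot all_order all_algebra.
Set Implicit Arguments. Unset Strict Implicit. Unset Printing Implicit Defensive.
Import Order.TTheory GRing.Theory Num.Theory.
Local Open Scope ring_scope.

(* The ground set {1,...,2n} is [set i : 'I_(2n).+1 | i != ord0]
   (index 0 is excluded, so that indices are literally 1..2n). *)
Definition ground (n : nat) : {set 'I_(2 * n).+1} :=
  [set i : 'I_(2 * n).+1 | i != ord0].

Definition blk (n : nat) (A : {set {set 'I_(2 * n).+1}}) (l : nat)
  : {set 'I_(2 * n).+1} := pblock A (inord l).

Definition maxblk (n : nat) (A : {set {set 'I_(2 * n).+1}}) (l : nat) : nat :=
  \max_(k in blk A l) (k : nat).

Definition inJ (n : nat) (A : {set {set 'I_(2 * n).+1}}) (l : nat) : bool :=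
  [&& (1 <= l)%N, (l <= 2 * n)%N & maxblk A l == l].

Definition inI (n : nat) (A : {set {set 'I_(2 * n).+1}}) (l : nat) : bool :=
  [&& (1 <= l)%N, (l <= 2 * n)%N & ~~ inJ A l].

(* [M_A(w)]_j, for w indexed by nat (only the values w_l, l \in I_A, matter). *)
Definition MA (R : ringType) (d n : nat) (A : {set {set 'I_(2 * n).+1}})
  (w : nat -> 'rV[R]_d) (j : nat) : 'rV[R]_d :=
  if inI A j then w j
  else - \sum_(k in blk A j | (k : nat) != j) w (k : nat).

Definition sigmaA (n : nat) (A : {set {set 'I_(2 * n).+1}}) (j l : nat) : nat :=
  if (j < maxblk A l)%N then 1%N else 0%N.

(* Main.v *)
Require Import Defs.
From HB Require Import structures.
From mathcomp Require Import all_boot all_order all_algebra.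
From mathcomp Require Import zify.
Set Implicit Arguments. Unset Strict Implicit.
Import Order.TTheory GRing.Theory Num.Theory.
Local Open Scope ring_scope.

Lemma in_ground n (k : 'I_(2*n).+1) : (k \in ground n) = (val k != 0%N).
Proof. by rewrite inE -(inj_eq val_inj). Qed.

Lemma cov n (A : {set {set 'I_(2 * n).+1}}) : partition A (ground n) -> cover A = ground n.
Proof. by case/and3P => /eqP. Qed.

Lemma triv n (A : {set {set 'I_(2 * n).+1}}) : partition A (ground n) -> trivIset A.
Proof. by case/and3P. Qed.

Lemma mem_blk n A l : partition A (ground n) -> (1 <= l <= 2 * n)%N ->
  (inord l : 'I_(2*n).+1) \in blk A l.
Proof.
move=> hP hl; rewrite /blk mem_pblock cov // in_ground /= inordK; lia.
Qed.

Lemma blk_val n A l (k : 'I_(2*n).+1) : partition A (ground n) ->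
  k \in blk A l -> blk A k = blk A l.
Proof. move=> hP hk; rewrite /blk in hk *; rewrite inord_val.
have ht := triv hP. apply: (same_pblock ht hk).
Qed.

Lemma blk_pos n A l (k : 'I_(2*n).+1) : partition A (ground n) ->
  k \in blk A l -> (1 <= k <= 2 * n)%N.
Proof.
move=> hP hk; have h := blk_val hP hk.
have : k \in blk A k by rewrite h.
rewrite /blk inord_val mem_pblock cov // in_ground.
have := ltn_ord k; rewrite /=; move=> ? ?; lia.
Qed.

Lemma le_maxblk n A l (k : 'I_(2*n).+1) : k \in blk A l -> (k <= maxblk A l)%N.
Proof. move=> hk; rewrite /maxblk; exact: (@leq_bigmax_cond _ (fun i => i \in blk A l) (fun k : 'I_(2*n).+1 => (k:nat)) k hk). Qed.

Lemma maxblk_att n A l : partition A (ground n) -> (1 <= l <= 2 * n)%N ->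
  exists2 k : 'I_(2*n).+1, k \in blk A l & val k = maxblk A l.
Proof.
move=> hP hl.
have h0 : (0 < #|blk A l|)%N by apply/card_gt0P; exists (inord l); exact: mem_blk.
have [k hk e] := eq_bigmax_cond (fun k : 'I_(2*n).+1 => (k:nat)) h0.
by exists k => //; rewrite /maxblk e.
Qed.

Lemma ge_maxblk n A l : partition A (ground n) -> (1 <= l <= 2 * n)%N -> (l <= maxblk A l)%N.
Proof.
move=> hP hl; have := le_maxblk (mem_blk hP hl); rewrite inordK //; lia.
Qed.

Lemma NJ n A l p : partition A (ground n) -> (1 <= l <= 2 * n)%N -> (1 <= p <= 2 * n)%N ->
  maxblk A l = p -> inJ A p.
Proof.
move=> hP hl hp e; have [k hk ek] := maxblk_att hP hl.
have e2 : blk A p = blk A l by rewrite -(blk_val hP hk) ek e.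
rewrite /inJ /maxblk e2 -/(maxblk A l) e eqxx; apply/andP; split; lia.
Qed.

Lemma blocksum (R : ringType) d n A (u : nat -> 'rV[R]_d) p :
  partition A (ground n) -> (1 <= p <= 2 * n)%N -> inJ A p ->
  \sum_(k in blk A p | (k : nat) != p) u k
  = \sum_(1 <= l < p) (if inI A l && (maxblk A l == p) then u l else 0).
Proof.
move=> hP hp hJ.
have hmp : maxblk A p = p by move: hJ => /and3P [_ _ /eqP].
rewrite big_mkcond /=.
have -> : \sum_(k < (2 * n).+1) (if (k \in blk A p) && (val k != p) then u k else 0)
   = \sum_(0 <= l < (2 * n).+1) (if ((inord l : 'I_(2*n).+1) \in blk A p) && (l != p) then u l else 0).
  by rewrite big_mkord; apply: eq_bigr => k _; rewrite inord_val.
rewrite (@big_nat_widen _ _ _ 1 p (2 * n).+1); last lia.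
rewrite big_ltn // /=.
have -> : ((inord 0 : 'I_(2*n).+1) \in blk A p) = false.
  apply/negP => h; have := blk_pos hP h; rewrite inordK //.
rewrite add0r [RHS]big_mkcond; apply: eq_big_nat => l hl.
case hB: ((inord l : 'I_(2*n).+1) \in blk A p).
- have bp := blk_pos hP hB; rewrite inordK in bp; last lia.
  have e : blk A l = blk A p by rewrite -(blk_val hP hB) inordK //; lia.
  have eml : maxblk A l = p by rewrite /maxblk e -/(maxblk A p).
  have le := le_maxblk hB; rewrite inordK in le; last lia.
  rewrite eml eqxx andbT /=.
  case: eqP => [->|ne]; first by rewrite ltnn.
  have -> : (l < p)%N by lia.
  suff -> : inI A l by [].
  rewrite /inI /inJ eml; apply/and3P; split; try lia.
- rewrite /=; case: (l < p)%N => //; case: ifP => // /andP [hI /eqP e].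
  have bl : (1 <= l <= 2 * n)%N by move: hI => /and3P [? ? _]; lia.
  have [k hk ek] := maxblk_att hP bl.
  have e2 : blk A p = blk A l by rewrite -(blk_val hP hk) ek e.
  by move: hB; rewrite e2 mem_blk.
Qed.

Lemma main_sum (R : ringType) d n A (u : nat -> 'rV[R]_d) m :
  partition A (ground n) -> (m <= 2 * n)%N ->
  \sum_(1 <= l < m.+1) MA A u l
  = \sum_(1 <= l < m.+1) (if inI A l && (m < maxblk A l)%N then u l else 0).
Proof.
move=> hP; elim: m => [|m IH] hm; first by rewrite !big_geq.
rewrite big_nat_recr // [RHS]big_nat_recr // IH; last lia.
have hb : (1 <= m.+1 <= 2 * n)%N by lia.

rewrite /MA; case hI: (inI A m.+1).
- have hlt : (m.+1 < maxblk A m.+1)%N.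
    have := ge_maxblk hP hb; move: hI => /and3P [_ _ /negP hJ].
    rewrite leq_eqVlt => /orP [/eqP e|//].
    by exfalso; apply: hJ; rewrite /inJ -e eqxx; apply/and3P; split; lia.
  rewrite hlt /=; congr (_ + _); apply: eq_big_nat => l hl.
  case hIl: (inI A l) => //=.
  have bl : (1 <= l <= 2 * n)%N by move: hIl => /and3P [? ? _]; lia.
  have ne : maxblk A l != m.+1.
    apply/eqP => e; have := NJ hP bl hb e; move: hI => /and3P [_ _ /negP]; done.
  have -> : (m < maxblk A l)%N = (m.+1 < maxblk A l)%N.
    by move: ne; case: ltngtP => //; lia.
  by [].
- have hJ : inJ A m.+1 by move: hI; rewrite /inI; case: (inJ A m.+1) => //; lia.
  rewrite /= addr0 (blocksum u hP hb hJ).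
  have -> : \sum_(1 <= l < m.+1) (if inI A l && (m < maxblk A l)%N then u l else 0)
    = \sum_(1 <= l < m.+1) (if inI A l && (m.+1 < maxblk A l)%N then u l else 0)
    + \sum_(1 <= l < m.+1) (if inI A l && (maxblk A l == m.+1) then u l else 0).
    rewrite -big_split; apply: eq_big_nat => l hl /=.
    case: (inI A l) => /=; last by rewrite addr0.
    set x := maxblk A l.
    have [h1|h1] := boolP (m.+1 < x)%N.
      have -> : (m < x)%N by lia.
      have -> : (x == m.+1) = false by apply/eqP; lia.
      by rewrite addr0.
    rewrite add0r.
    have [h2|h2] := boolP (x == m.+1).
      have -> : (m < x)%N by move/eqP: h2; lia.
      by [].
    have -> : (m < x)%N = false by move/eqP: h2; lia.
    by [].
  by rewrite -addrA subrr addr0.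
Qed.

Theorem lemma10 (R : realFieldType) (d n : nat)
  (A : {set {set 'I_(2 * n).+1}}) (u : nat -> 'rV[R]_d) (j : nat) :
  partition A (ground n) ->
  (2 <= j)%N -> (j <= (2 * n).+1)%N -> inI A j.-1 ->
  u 0%N + \sum_(1 <= l < j) MA A u l
  = u j.-1 + u 0%N
    + \sum_(1 <= l < j.-1 | inI A l) (sigmaA A (j - 2) l)%:R *: u l.
Proof.
case: j => [|[|m]] // hP _ hj hI /=.
have hb : (1 <= m.+1 <= 2 * n)%N by lia.
rewrite (main_sum u hP); last lia.
rewrite big_nat_recr //= hI.
have hlt : (m.+1 < maxblk A m.+1)%N.
  have := ge_maxblk hP hb; move: hI => /and3P [_ _ /negP hJ].
  rewrite leq_eqVlt => /orP [/eqP e|//].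
  by exfalso; apply: hJ; rewrite /inJ -e eqxx; apply/and3P; split; lia.
rewrite hlt /= [_ + u m.+1]addrC [u m.+1 + u 0%N]addrC -addrA; congr (_ + (_ + _)).
have -> : (m.+2 - 2 = m)%N by lia.
rewrite [RHS]big_mkcond; apply: eq_big_nat => l hl /=.
case hIl: (inI A l) => //=.
have bl : (1 <= l <= 2 * n)%N by move: hIl => /and3P [? ? _]; lia.
have ne : maxblk A l != m.+1.
  apply/eqP => e; have := NJ hP bl hb e; move: hI => /and3P [_ _ /negP]; done.
rewrite /sigmaA.
have -> : (m < maxblk A l)%N = (m.+1 < maxblk A l)%N.
  by move: ne; case: ltngtP => //; lia.
by case: ifP => _; rewrite ?scale1r ?scale0r.
Qed.
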